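(* In $\mathbb{C}^3\otimes\mathbb{C}^2\otimes\mathbb{C}^2$ there are exactly two SLOCC equivalence classes of SLOCC maximal states, represented by $|\Phi_1\rangle=|0\rangle|00\rangle+|1\rangle|01\rangle+|2\rangle|11\rangle$ and $|\Phi_2\rangle=|0\rangle|00\rangle+|1\rangle(|01\rangle+|10\rangle)+|2\rangle|11\rangle$, where the first ket is in $\mathbb{C}^3$ and the two-qubit ket is in $\mathbb{C}^2\otimes\mathbb{C}^2$.
   Context: $|\psi\rangle\le_{\mathrm{SLOCC}}|\phi\rangle$ means $(L_1\otimes L_2\otimes L_3)|\phi\rangle=|\psi\rangle$ for some linear operators $L_i$ on the respective factors; SLOCC equivalence means mutual $\le_{\mathrm{SLOCC}}$ (equivalently relation by invertible local operators). A state $|\phi\rangle$ is SLOCC maximal if for every $|\psi\rangle$ in the space, $|\phi\rangle\le_{\mathrm{SLOCC}}|\psi\rangle$ implies $|\psi\rangle\le_{\mathrm{SLOCC}}|\phi\rangle$. $\{|0\rangle,|1\rangle,\dots\}$ denote standard orthonormal bases. *)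

(* Defs.v *)
From HB Require Import structures.
From mathcomp Require Import all_boot all_order all_algebra.
Set Implicit Arguments. Unset Strict Implicit. Unset Printing Implicit Defensive.
Import Order.TTheory GRing.Theory Num.Theory.
Local Open Scope ring_scope.

(* A state of C^3 (x) C^2 (x) C^2, written in the standard product basis:
   psi (i, j, k) is the coefficient of |i>|j k>. *)
Definition state (C : numClosedFieldType) := {ffun 'I_3 * 'I_2 * 'I_2 -> C}.

(* (L1 (x) L2 (x) L3) psi, for arbitrary (not necessarily invertible) linear maps. *)
Definition apply_local (C : numClosedFieldType)
    (L1 : 'M[C]_3) (L2 L3 : 'M[C]_2) (psi : state C) : state C :=
  [ffun ijk : 'I_3 * 'I_2 * 'I_2 =>
     let: (i, j, k) := ijk in
     \sum_(a < 3) \sum_(b < 2) \sum_(c < 2)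
        L1 i a * L2 j b * L3 k c * psi (a, b, c)].

Definition slocc_le (C : numClosedFieldType) (psi phi : state C) : Prop :=
  exists (L1 : 'M[C]_3) (L2 L3 : 'M[C]_2), apply_local L1 L2 L3 phi = psi.

Definition slocc_equiv (C : numClosedFieldType) (psi phi : state C) : Prop :=
  slocc_le psi phi /\ slocc_le phi psi.

Definition slocc_maximal (C : numClosedFieldType) (phi : state C) : Prop :=
  forall psi : state C, slocc_le phi psi -> slocc_le psi phi.

Definition ket (C : numClosedFieldType) (i : 'I_3) (j k : 'I_2) : state C :=
  [ffun x => if x == (i, j, k) then 1 else 0].

Definition i3 (n : nat) : 'I_3 := inord n.
Definition i2 (n : nat) : 'I_2 := inord n.

Definition Phi1 (C : numClosedFieldType) : state C :=
  ket C (i3 0) (i2 0) (i2 0) + ket C (i3 1) (i2 0) (i2 1) + ket C (i3 2) (i2 1) (i2 1).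

Definition Phi2 (C : numClosedFieldType) : state C :=
  ket C (i3 0) (i2 0) (i2 0)
  + (ket C (i3 1) (i2 0) (i2 1) + ket C (i3 1) (i2 1) (i2 0))
  + ket C (i3 2) (i2 1) (i2 1).

(* Main.v *)
Require Import Defs.
From HB Require Import structures.
From mathcomp Require Import all_boot all_order all_algebra.
From Stdlib Require Import Ring.

Set Implicit Arguments. Unset Strict Implicit. Unset Printing Implicit Defensive.
Import Order.TTheory GRing.Theory Num.Theory.
Local Open Scope ring_scope.

Section S.
Variable R : numClosedFieldType.
Definition pl (x y : R) : R := x + y.
Definition ml (x y : R) : R := x * y.
Definition op (x : R) : R := - x.
Definition zr : R := 0.
Definition on : R := 1.
Definition sb (x y : R) : R := pl x (op y).
Lemma RT : @ring_theory R zr on pl ml sb op (@eq R).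
Proof.
rewrite /pl/ml/op/zr/on/sb.
split=> //; [exact: add0r|exact: addrC|exact: addrA|exact: mul1r|exact: mulrC|exact: mulrA|exact: mulrDl|exact: subrr].
Qed.
Add Ring Rr : RT.
Lemma plE (x y : R) : x + y = pl x y. Proof. by []. Qed.
Lemma mlE (x y : R) : x * y = ml x y. Proof. by []. Qed.
Lemma opE (x : R) : - x = op x. Proof. by []. Qed.
Lemma zrE : 0 = zr :> R. Proof. by []. Qed.
Lemma onE : 1 = on :> R. Proof. by []. Qed.
Definition iv (x : R) : R := x^-1.
Lemma ivE (x : R) : x^-1 = iv x. Proof. by []. Qed.
Lemma eqI (x y : R) : @eq R x y -> x = y. Proof. by []. Qed.
Ltac normfm := repeat match goal with |- context [@fun_of_matrix ?T ?m ?n ?A ?i ?j] =>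
  progress change (@fun_of_matrix T m n A i j) with (@fun_of_matrix (Num.ClosedField.sort R) m n A i j) end.
Ltac rr := apply: eqI; normfm; rewrite ?ivE ?plE ?mlE ?opE ?zrE ?onE; ring.

Lemma sum3 (F : 'I_3 -> R) : \sum_(a < 3) F a = F (i3 0) + F (i3 1) + F (i3 2).
Proof.
rewrite !big_ord_recr big_ord0 /= add0r.
by congr (F _ + F _ + F _); apply: val_inj; rewrite /= inordK.
Qed.
Lemma sum2 (F : 'I_2 -> R) : \sum_(a < 2) F a = F (i2 0) + F (i2 1).
Proof.
rewrite !big_ord_recr big_ord0 /= add0r.
by congr (F _ + F _); apply: val_inj; rewrite /= inordK.
Qed.


Lemma eq3 (a b : nat) : (a < 3)%N -> (b < 3)%N -> (i3 a == i3 b) = (a == b).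
Proof. by move=> ha hb; rewrite -val_eqE /= !inordK. Qed.
Lemma eq2 (a b : nat) : (a < 2)%N -> (b < 2)%N -> (i2 a == i2 b) = (a == b).
Proof. by move=> ha hb; rewrite -val_eqE /= !inordK. Qed.

Lemma apE (L1 : 'M[R]_3) (L2 L3 : 'M[R]_2) (phi : state R) i j k :
  apply_local L1 L2 L3 phi (i, j, k) =
  \sum_(a < 3) (L1 i a * (L2 j (i2 0) * (L3 k (i2 0) * phi (a, i2 0, i2 0) + L3 k (i2 1) * phi (a, i2 0, i2 1))
           + L2 j (i2 1) * (L3 k (i2 0) * phi (a, i2 1, i2 0) + L3 k (i2 1) * phi (a, i2 1, i2 1)))).
Proof.
rewrite ffunE; apply: eq_bigr => a _.
rewrite !sum2.
rr.
Qed.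


Lemma Phi1E x : Phi1 R x = (if x == (i3 0, i2 0, i2 0) then 1 else 0) + (if x == (i3 1, i2 0, i2 1) then 1 else 0)
   + (if x == (i3 2, i2 1, i2 1) then 1 else 0).
Proof. by rewrite /Phi1 /ket !ffunE. Qed.
Lemma Phi2E x : Phi2 R x = (if x == (i3 0, i2 0, i2 0) then 1 else 0) + ((if x == (i3 1, i2 0, i2 1) then 1 else 0)
   + (if x == (i3 1, i2 1, i2 0) then 1 else 0)) + (if x == (i3 2, i2 1, i2 1) then 1 else 0).
Proof. by rewrite /Phi2 /ket !ffunE. Qed.

Lemma appPhi1 (L1 : 'M[R]_3) (L2 L3 : 'M[R]_2) i j k :
  apply_local L1 L2 L3 (Phi1 R) (i, j, k) =
  L1 i (i3 0) * L2 j (i2 0) * L3 k (i2 0) + L1 i (i3 1) * L2 j (i2 0) * L3 k (i2 1)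
  + L1 i (i3 2) * L2 j (i2 1) * L3 k (i2 1).
Proof.
rewrite apE !sum3 !Phi1E !xpair_eqE !eq3 // !eq2 //=.
rr.
Qed.

Lemma appPhi2 (L1 : 'M[R]_3) (L2 L3 : 'M[R]_2) i j k :
  apply_local L1 L2 L3 (Phi2 R) (i, j, k) =
  L1 i (i3 0) * L2 j (i2 0) * L3 k (i2 0)
  + L1 i (i3 1) * (L2 j (i2 0) * L3 k (i2 1) + L2 j (i2 1) * L3 k (i2 0))
  + L1 i (i3 2) * L2 j (i2 1) * L3 k (i2 1).
Proof.
rewrite apE !sum3 !Phi2E !xpair_eqE !eq3 // !eq2 //=.
rr.
Qed.

Lemma state_ext (f g : state R) :
  (forall a b c, (a < 3)%N -> (b < 2)%N -> (c < 2)%N -> f (i3 a, i2 b, i2 c) = g (i3 a, i2 b, i2 c)) ->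
  f = g.
Proof.
move=> H; apply/ffunP => [[[i j] k]].
have -> : i = i3 i by apply: val_inj; rewrite /= inordK.
have -> : j = i2 j by apply: val_inj; rewrite /= inordK.
have -> : k = i2 k by apply: val_inj; rewrite /= inordK.
by apply: H.
Qed.

Local Notation e2 M r s := (M (i2 r) (i2 s)).
Local Notation e3 M r s := (M (i3 r) (i3 s)).

Ltac evPhi := rewrite ?Phi1E ?Phi2E !xpair_eqE !eq3 // !eq2 //=.

Lemma mul_neq0 (x y : R) : x * y = 1 -> x != 0 /\ y != 0.
Proof.
move=> h; split; apply/negP => /eqP z; move: h; rewrite z ?mul0r ?mulr0 => /esym/eqP; rewrite oner_eq0.
all: by [].
Qed.

Lemma notle12 : ~ slocc_le (Phi1 R) (Phi2 R).
Proof.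
move=> [L1 [L2 [L3 H]]].
have K0 : (e2 L2 1 0) * (e2 L3 1 1) - (e2 L2 1 1) * (e2 L3 1 0) = 0.
  have E : (- (e2 L2 1 1) * (e2 L3 1 0) + (e2 L2 1 0) * (e2 L3 1 1)) * apply_local L1 L2 L3 (Phi2 R) (i3 0, i2 0, i2 0)
    + ((e2 L2 1 1) * (e2 L3 0 0) - (e2 L2 1 0) * (e2 L3 0 1)) * apply_local L1 L2 L3 (Phi2 R) (i3 0, i2 0, i2 1)
    + ((e2 L2 0 1) * (e2 L3 1 0) - (e2 L2 0 0) * (e2 L3 1 1)) * apply_local L1 L2 L3 (Phi2 R) (i3 0, i2 1, i2 0)
    + ((e2 L2 0 0) * (e2 L3 0 1) - (e2 L2 0 1) * (e2 L3 0 0)) * apply_local L1 L2 L3 (Phi2 R) (i3 0, i2 1, i2 1) = 0.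
    by rewrite !appPhi2; rr.
  rewrite H in E; move: E; evPhi => E; rewrite -{}E; rr.
have K1 : (e2 L2 1 1) * (e2 L3 0 0) - (e2 L2 1 0) * (e2 L3 0 1) = 0.
  have E : (- (e2 L2 1 1) * (e2 L3 1 0) + (e2 L2 1 0) * (e2 L3 1 1)) * apply_local L1 L2 L3 (Phi2 R) (i3 1, i2 0, i2 0)
    + ((e2 L2 1 1) * (e2 L3 0 0) - (e2 L2 1 0) * (e2 L3 0 1)) * apply_local L1 L2 L3 (Phi2 R) (i3 1, i2 0, i2 1)
    + ((e2 L2 0 1) * (e2 L3 1 0) - (e2 L2 0 0) * (e2 L3 1 1)) * apply_local L1 L2 L3 (Phi2 R) (i3 1, i2 1, i2 0)
    + ((e2 L2 0 0) * (e2 L3 0 1) - (e2 L2 0 1) * (e2 L3 0 0)) * apply_local L1 L2 L3 (Phi2 R) (i3 1, i2 1, i2 1) = 0.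
    by rewrite !appPhi2; rr.
  rewrite H in E; move: E; evPhi => E; rewrite -{}E; rr.
have D : ((e2 L2 0 0) * (e2 L2 1 1) - (e2 L2 0 1) * (e2 L2 1 0)) * (((e2 L3 0 0) * (e2 L3 1 1) - (e2 L3 0 1) * (e2 L3 1 0)) *
   (((e3 L1 0 0) + (e3 L1 2 0)) * ((e3 L1 0 2) + (e3 L1 2 2)) - ((e3 L1 0 1) + (e3 L1 2 1)) * ((e3 L1 0 1) + (e3 L1 2 1)))) = 1.
  have E : (apply_local L1 L2 L3 (Phi2 R) (i3 0, i2 0, i2 0) + apply_local L1 L2 L3 (Phi2 R) (i3 2, i2 0, i2 0))
     * (apply_local L1 L2 L3 (Phi2 R) (i3 0, i2 1, i2 1) + apply_local L1 L2 L3 (Phi2 R) (i3 2, i2 1, i2 1))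
     - (apply_local L1 L2 L3 (Phi2 R) (i3 0, i2 0, i2 1) + apply_local L1 L2 L3 (Phi2 R) (i3 2, i2 0, i2 1))
     * (apply_local L1 L2 L3 (Phi2 R) (i3 0, i2 1, i2 0) + apply_local L1 L2 L3 (Phi2 R) (i3 2, i2 1, i2 0))
     = ((e2 L2 0 0) * (e2 L2 1 1) - (e2 L2 0 1) * (e2 L2 1 0)) * (((e2 L3 0 0) * (e2 L3 1 1) - (e2 L3 0 1) * (e2 L3 1 0)) *
   (((e3 L1 0 0) + (e3 L1 2 0)) * ((e3 L1 0 2) + (e3 L1 2 2)) - ((e3 L1 0 1) + (e3 L1 2 1)) * ((e3 L1 0 1) + (e3 L1 2 1)))).
    by rewrite !appPhi2; rr.
  rewrite -{}E H; evPhi; rr.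
have [d2 _] := mul_neq0 D.
have [d3 _] := mul_neq0 (etrans (mulrCA _ _ _) D).
have c0 : (e2 L2 1 0) * ((e2 L3 0 0) * (e2 L3 1 1) - (e2 L3 0 1) * (e2 L3 1 0)) = 0.
  have -> : (e2 L2 1 0) * ((e2 L3 0 0) * (e2 L3 1 1) - (e2 L3 0 1) * (e2 L3 1 0)) =
     (e2 L3 0 0) * ((e2 L2 1 0) * (e2 L3 1 1) - (e2 L2 1 1) * (e2 L3 1 0)) - (e2 L3 1 0) * ((e2 L2 1 0) * (e2 L3 0 1) - (e2 L2 1 1) * (e2 L3 0 0)) by rr.
  rewrite K0 -[_ - (e2 L2 1 1) * _]opprB K1; rr.
have d0 : (e2 L2 1 1) * ((e2 L3 0 0) * (e2 L3 1 1) - (e2 L3 0 1) * (e2 L3 1 0)) = 0.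
  have -> : (e2 L2 1 1) * ((e2 L3 0 0) * (e2 L3 1 1) - (e2 L3 0 1) * (e2 L3 1 0)) =
     (e2 L3 1 1) * ((e2 L2 1 1) * (e2 L3 0 0) - (e2 L2 1 0) * (e2 L3 0 1)) + (e2 L3 0 1) * ((e2 L2 1 0) * (e2 L3 1 1) - (e2 L2 1 1) * (e2 L3 1 0)) by rr.
  rewrite K0 K1; rr.
move: c0 d0 => /eqP; rewrite mulf_eq0 (negPf d3) orbF => /eqP c0 /eqP; rewrite mulf_eq0 (negPf d3) orbF => /eqP d0.
by move: d2; rewrite c0 d0 !mulr0 subrr eqxx.
Qed.

Lemma notle21 : ~ slocc_le (Phi2 R) (Phi1 R).
Proof.
move=> [L1 [L2 [L3 H]]].
pose F := apply_local L1 L2 L3 (Phi1 R).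
have G : forall a, (- (e2 L2 1 0) * (e2 L3 1 1)) * F (i3 a, i2 0, i2 0) + (e2 L2 1 0) * (e2 L3 0 1) * F (i3 a, i2 0, i2 1)
   + (e2 L2 0 0) * (e2 L3 1 1) * F (i3 a, i2 1, i2 0) - (e2 L2 0 0) * (e2 L3 0 1) * F (i3 a, i2 1, i2 1) = 0.
  by move=> a; rewrite /F !appPhi1; rr.
have K0 := G 0%N; have K1 := G 1%N; have K2 := G 2%N.
rewrite /F H in K0 K1 K2; move: K0 K1 K2; evPhi => K0 K1 K2.
have {}K0 : e2 L2 1 0 * e2 L3 1 1 = 0 by rewrite -[RHS]oppr0 -{}K0; rr.
have {}K1 : e2 L2 1 0 * e2 L3 0 1 + e2 L2 0 0 * e2 L3 1 1 = 0 by rewrite -{}K1; rr.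
have {}K2 : e2 L2 0 0 * e2 L3 0 1 = 0 by rewrite -[RHS]oppr0 -{}K2; rr.
have D : ((e2 L2 0 0) * (e2 L2 1 1) - (e2 L2 0 1) * (e2 L2 1 0)) * (((e2 L3 0 0) * (e2 L3 1 1) - (e2 L3 0 1) * (e2 L3 1 0)) *
   (((e3 L1 0 0) + (e3 L1 2 0)) * ((e3 L1 0 2) + (e3 L1 2 2)))) = 1.
  have E : (F (i3 0, i2 0, i2 0) + F (i3 2, i2 0, i2 0)) * (F (i3 0, i2 1, i2 1) + F (i3 2, i2 1, i2 1))
     - (F (i3 0, i2 0, i2 1) + F (i3 2, i2 0, i2 1)) * (F (i3 0, i2 1, i2 0) + F (i3 2, i2 1, i2 0))
     = ((e2 L2 0 0) * (e2 L2 1 1) - (e2 L2 0 1) * (e2 L2 1 0)) * (((e2 L3 0 0) * (e2 L3 1 1) - (e2 L3 0 1) * (e2 L3 1 0)) *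
   (((e3 L1 0 0) + (e3 L1 2 0)) * ((e3 L1 0 2) + (e3 L1 2 2)))).
    by rewrite /F !appPhi1; rr.
  rewrite -{}E /F H; evPhi; rr.
have [d2 _] := mul_neq0 D.
have [d3 _] := mul_neq0 (etrans (mulrCA _ _ _) D).
move: K0 => /eqP; rewrite mulf_eq0 => /orP [] /eqP c0.
- rewrite c0 mul0r add0r in K1.
  have : e2 L2 0 0 * (e2 L3 0 0 * e2 L3 1 1 - e2 L3 0 1 * e2 L3 1 0) = 0.
    have -> : e2 L2 0 0 * (e2 L3 0 0 * e2 L3 1 1 - e2 L3 0 1 * e2 L3 1 0) =
      e2 L3 0 0 * (e2 L2 0 0 * e2 L3 1 1) - e2 L3 1 0 * (e2 L2 0 0 * e2 L3 0 1) by rr.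
    rewrite K1 K2; rr.
  move/eqP; rewrite mulf_eq0 (negPf d3) orbF => /eqP a0.
  by move: d2; rewrite a0 c0 !mul0r mulr0 subrr eqxx.
- rewrite c0 mulr0 addr0 in K1.
  have : e2 L3 0 1 * (e2 L2 0 0 * e2 L2 1 1 - e2 L2 0 1 * e2 L2 1 0) = 0.
    have -> : e2 L3 0 1 * (e2 L2 0 0 * e2 L2 1 1 - e2 L2 0 1 * e2 L2 1 0) =
      e2 L2 1 1 * (e2 L2 0 0 * e2 L3 0 1) - e2 L2 0 1 * (e2 L2 1 0 * e2 L3 0 1) by rr.
    rewrite K1 K2; rr.
  move/eqP; rewrite mulf_eq0 (negPf d2) orbF => /eqP f0.
  by move: d3; rewrite f0 c0 !mul0r mulr0 subrr eqxx.
Qed.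

Definition i4 (n : nat) : 'I_4 := inord n.
Lemma sum4 (F : 'I_4 -> R) : \sum_(a < 4) F a = F (i4 0) + F (i4 1) + F (i4 2) + F (i4 3).
Proof.
rewrite !big_ord_recr big_ord0 /= add0r.
by congr (F _ + F _ + F _ + F _); apply: val_inj; rewrite /= inordK.
Qed.

Lemma kerZ (psi : state R) : exists z00 z01 z10 z11 : R,
  [|| z00 != 0, z01 != 0, z10 != 0 | z11 != 0] /\
  forall a : 'I_3, z00 * psi (a, i2 0, i2 0) + z01 * psi (a, i2 0, i2 1) + z10 * psi (a, i2 1, i2 0)
            + z11 * psi (a, i2 1, i2 1) = 0.
Proof.
pose A : 'M[R]_(4, 3) := \matrix_(r < 4, a < 3) psi (a, i2 (r %/ 2), i2 (r %% 2)).
have nf : ~~ row_free A.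
  rewrite /row_free; apply/negP => /eqP h; have := rank_leq_col A; rewrite h.
  by [].
have : kermx A != 0 by rewrite kermx_eq0.
case/rowV0Pn => v /sub_kermxP vA v0.
exists (v 0 (i4 0)), (v 0 (i4 1)), (v 0 (i4 2)), (v 0 (i4 3)); split.
  case/rV0Pn: v0 => i; case: i => [[|[|[|[|//]]]] Hi] Hv.
  - have -> : i4 0 = Ordinal Hi by apply: val_inj; rewrite /= inordK.
    by rewrite Hv.
  - have -> : i4 1 = Ordinal Hi by apply: val_inj; rewrite /= inordK.
    by rewrite Hv orbT.
  - have -> : i4 2 = Ordinal Hi by apply: val_inj; rewrite /= inordK.
    by rewrite Hv !orbT.
  - have -> : i4 3 = Ordinal Hi by apply: val_inj; rewrite /= inordK.
    by rewrite Hv !orbT.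
move=> a; have := congr1 (fun M : 'M[R]_(1,3) => M 0 a) vA; rewrite !mxE sum4 !mxE /i4 !inordK //=.
Qed.

Definition mk2 (a b c d : R) : 'M[R]_2 :=
  \matrix_(j < 2, k < 2) if j == i2 0 then (if k == i2 0 then a else b) else (if k == i2 0 then c else d).
Lemma mk00 a b c d : e2 (mk2 a b c d) 0 0 = a. Proof. by rewrite mxE !eq2. Qed.
Lemma mk01 a b c d : e2 (mk2 a b c d) 0 1 = b. Proof. by rewrite mxE !eq2. Qed.
Lemma mk10 a b c d : e2 (mk2 a b c d) 1 0 = c. Proof. by rewrite mxE !eq2. Qed.
Lemma mk11 a b c d : e2 (mk2 a b c d) 1 1 = d. Proof. by rewrite mxE !eq2. Qed.

Definition inv2 (U P : 'M[R]_2) := forall j r, (j < 2)%N -> (r < 2)%N ->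
  e2 U j 0 * e2 P 0 r + e2 U j 1 * e2 P 1 r = (j == r)%:R.

Definition xs (P Q : 'M[R]_2) (m : nat -> nat -> R) r' s' :=
  e2 P r' 0 * e2 Q s' 0 * m 0%N 0%N + e2 P r' 0 * e2 Q s' 1 * m 0%N 1%N
  + e2 P r' 1 * e2 Q s' 0 * m 1%N 0%N + e2 P r' 1 * e2 Q s' 1 * m 1%N 1%N.

Lemma full_id (U W P Q : 'M[R]_2) (m : nat -> nat -> R) j k : inv2 U P -> inv2 W Q -> (j < 2)%N -> (k < 2)%N ->
  xs P Q m 0 0 * e2 U j 0 * e2 W k 0 + xs P Q m 0 1 * e2 U j 0 * e2 W k 1
  + xs P Q m 1 0 * e2 U j 1 * e2 W k 0 + xs P Q m 1 1 * e2 U j 1 * e2 W k 1 = m j k.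
Proof.
move=> hU hW hj hk.
have -> : xs P Q m 0 0 * e2 U j 0 * e2 W k 0 + xs P Q m 0 1 * e2 U j 0 * e2 W k 1
  + xs P Q m 1 0 * e2 U j 1 * e2 W k 0 + xs P Q m 1 1 * e2 U j 1 * e2 W k 1 =
  (e2 U j 0 * e2 P 0 0 + e2 U j 1 * e2 P 1 0) * m 0%N 0%N * (e2 W k 0 * e2 Q 0 0 + e2 W k 1 * e2 Q 1 0)
  + (e2 U j 0 * e2 P 0 0 + e2 U j 1 * e2 P 1 0) * m 0%N 1%N * (e2 W k 0 * e2 Q 0 1 + e2 W k 1 * e2 Q 1 1)
  + (e2 U j 0 * e2 P 0 1 + e2 U j 1 * e2 P 1 1) * m 1%N 0%N * (e2 W k 0 * e2 Q 0 0 + e2 W k 1 * e2 Q 1 0)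
  + (e2 U j 0 * e2 P 0 1 + e2 U j 1 * e2 P 1 1) * m 1%N 1%N * (e2 W k 0 * e2 Q 0 1 + e2 W k 1 * e2 Q 1 1).
  by rewrite /xs; rr.
rewrite !hU // !hW //.
by case: j hj => [|[|//]] _; case: k hk => [|[|//]] _ /=; rewrite ?mul1r ?mulr1 ?mul0r ?mulr0 ?addr0 ?add0r.
Qed.

Lemma genSym (U W P Q : 'M[R]_2) (m : nat -> nat -> R) j k : inv2 U P -> inv2 W Q -> (j < 2)%N -> (k < 2)%N ->
  xs P Q m 0 1 = xs P Q m 1 0 ->
  xs P Q m 0 0 * e2 U j (0%N) * e2 W k 0 + xs P Q m 0 1 * (e2 U j 0 * e2 W k 1 + e2 U j 1 * e2 W k 0)
  + xs P Q m 1 1 * e2 U j 1 * e2 W k 1 = m j k.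
Proof.
move=> hU hW hj hk hx; rewrite -(full_id m hU hW hj hk) hx; rr.
Qed.

Lemma genUp (U W P Q : 'M[R]_2) (m : nat -> nat -> R) j k : inv2 U P -> inv2 W Q -> (j < 2)%N -> (k < 2)%N ->
  xs P Q m 1 0 = 0 ->
  xs P Q m 0 0 * e2 U j 0 * e2 W k 0 + xs P Q m 0 1 * e2 U j 0 * e2 W k 1
  + xs P Q m 1 1 * e2 U j 1 * e2 W k 1 = m j k.
Proof.
move=> hU hW hj hk hx; rewrite -(full_id m hU hW hj hk) hx; rr.
Qed.

Definition sl (psi : state R) (a : 'I_3) : nat -> nat -> R := fun j k => psi (a, i2 j, i2 k).

Definition mkL1 (f0 f1 f2 : 'I_3 -> R) : 'M[R]_3 :=
  \matrix_(a < 3, c < 3) if c == i3 0 then f0 a else if c == i3 1 then f1 a else f2 a.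

Lemma realize2 (psi : state R) (U W P Q : 'M[R]_2) : inv2 U P -> inv2 W Q ->
  (forall a, xs P Q (sl psi a) 0 1 = xs P Q (sl psi a) 1 0) -> slocc_le psi (Phi2 R).
Proof.
move=> hU hW hx.
exists (mkL1 (fun a => xs P Q (sl psi a) 0 0) (fun a => xs P Q (sl psi a) 0 1) (fun a => xs P Q (sl psi a) 1 1)), U, W.
apply: state_ext => a b c ha hb hc; rewrite appPhi2 !mxE !eq3 //=.
exact: (genSym (m := sl psi (i3 a)) hU hW hb hc (hx _)).
Qed.

Lemma realize1 (psi : state R) (U W P Q : 'M[R]_2) : inv2 U P -> inv2 W Q ->
  (forall a, xs P Q (sl psi a) 1 0 = 0) -> slocc_le psi (Phi1 R).
Proof.
move=> hU hW hx.
exists (mkL1 (fun a => xs P Q (sl psi a) 0 0) (fun a => xs P Q (sl psi a) 0 1) (fun a => xs P Q (sl psi a) 1 1)), U, W.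
apply: state_ext => a b c ha hb hc; rewrite appPhi1 !mxE !eq3 //=.
exact: (genUp (m := sl psi (i3 a)) hU hW hb hc (hx _)).
Qed.

Lemma lin0 (x y d k : R) : d = 0 -> x - y = k * d -> x = y.
Proof. by move=> -> ; rewrite mulr0 => /eqP; rewrite subr_eq0 => /eqP. Qed.

Ltac fin h := first [rr | rewrite -[RHS](mulVf h); rr].

Lemma compl1 (u0 u1 : R) : (u0 != 0) || (u1 != 0) -> exists P U : 'M[R]_2, [/\ e2 P 1 0 = u0, e2 P 1 1 = u1 & inv2 U P].
Proof.
case/orP => h.
- exists (mk2 0 1 u0 u1), (mk2 (- (u1 * u0^-1)) (u0^-1) 1 0); split; rewrite ?mk10 ?mk11 //.
  move=> j r; case: j => [|[|//]] _; case: r => [|[|//]] _ /=; rewrite ?mk00 ?mk01 ?mk10 ?mk11 ?mulr1n ?mulr0n; fin h.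
- exists (mk2 1 0 u0 u1), (mk2 1 0 (- (u0 * u1^-1)) (u1^-1)); split; rewrite ?mk10 ?mk11 //.
  move=> j r; case: j => [|[|//]] _; case: r => [|[|//]] _ /=; rewrite ?mk00 ?mk01 ?mk10 ?mk11 ?mulr1n ?mulr0n; fin h.
Qed.

Lemma compl0 (v0 v1 : R) : (v0 != 0) || (v1 != 0) -> exists Q W : 'M[R]_2, [/\ e2 Q 0 0 = v0, e2 Q 0 1 = v1 & inv2 W Q].
Proof.
case/orP => h.
- exists (mk2 v0 v1 0 1), (mk2 (v0^-1) (- (v1 * v0^-1)) 0 1); split; rewrite ?mk00 ?mk01 //.
  move=> j r; case: j => [|[|//]] _; case: r => [|[|//]] _ /=; rewrite ?mk00 ?mk01 ?mk10 ?mk11 ?mulr1n ?mulr0n; fin h.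
- exists (mk2 v0 v1 1 0), (mk2 0 1 (v1^-1) (- (v0 * v1^-1))); split; rewrite ?mk00 ?mk01 //.
  move=> j r; case: j => [|[|//]] _; case: r => [|[|//]] _ /=; rewrite ?mk00 ?mk01 ?mk10 ?mk11 ?mulr1n ?mulr0n; fin h.
Qed.

Lemma fE (x y c : R) : c != 0 -> x * c = y -> x = y * c^-1.
Proof. by move=> h <-; rewrite mulfK. Qed.

Lemma factor (z00 z01 z10 z11 : R) : [|| z00 != 0, z01 != 0, z10 != 0 | z11 != 0] ->
  z00 * z11 - z01 * z10 = 0 ->
  exists u0 u1 v0 v1 : R, [/\ (u0 != 0) || (u1 != 0), (v0 != 0) || (v1 != 0) &
     [/\ z00 = u0 * v0, z01 = u0 * v1, z10 = u1 * v0 & z11 = u1 * v1]].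
Proof.
move=> nz hd.
case/orP: nz => [h|/orP [h|/orP [h|h]]].
- exists z00, z10, 1, (z01 * z00^-1); split; rewrite ?h ?oner_neq0 ?orbT //; split; rewrite ?mulr1 //.
  + by rewrite mulrA; apply: fE => //; rr.
  + rewrite mulrA; apply: fE => //; apply: (lin0 (k := 1) hd); rr.
- exists z01, z11, (z00 * z01^-1), 1; split; rewrite ?h ?oner_neq0 ?orbT //; split; rewrite ?mulr1 //.
  + by rewrite mulrA; apply: fE => //; rr.
  + rewrite mulrA; apply: fE => //; apply: (lin0 (k := -1) hd); rr.
- exists (z00 * z10^-1), 1, z10, z11; split; rewrite ?h ?oner_neq0 ?orbT //; split; rewrite ?mul1r //.
  + by rewrite mulrAC; apply: fE => //; rr.
  + rewrite mulrAC; apply: fE => //; apply: (lin0 (k := -1) hd); rr.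
- exists (z01 * z11^-1), 1, z10, z11; split; rewrite ?h ?oner_neq0 ?orbT //; split; rewrite ?mul1r //.
  + rewrite mulrAC; apply: fE => //; apply: (lin0 (k := 1) hd); rr.
  + by rewrite mulrAC; apply: fE => //; rr.
Qed.

Lemma univ (psi : state R) : slocc_le psi (Phi1 R) \/ slocc_le psi (Phi2 R).
Proof.
have [z00 [z01 [z10 [z11 [nz hz]]]]] := kerZ psi.
case: (eqVneq (z00 * z11 - z01 * z10) 0) => hd.
- left.
  have [u0 [u1 [v0 [v1 [hu hv [e00 e01 e10 e11]]]]]] := factor nz hd.
  have [P [U [p10 p11 hUP]]] := compl1 hu.
  have [Q [W [q00 q01 hWQ]]] := compl0 hv.
  apply: (realize1 hUP hWQ) => a.
  rewrite /xs p10 p11 q00 q01 /sl /=.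
  have := hz a; rewrite e00 e01 e10 e11 => h; rewrite -{}h; rr.
- right.
  apply: (@realize2 psi (mk2 1 0 0 1) (mk2 (z01 * (z00 * z11 - z01 * z10)^-1) (z11 * (z00 * z11 - z01 * z10)^-1)
     (- (z00 * (z00 * z11 - z01 * z10)^-1)) (- (z10 * (z00 * z11 - z01 * z10)^-1)))
     (mk2 1 0 0 1) (mk2 (- z10) (- z11) z00 z01)).
  + move=> j r; case: j => [|[|//]] _; case: r => [|[|//]] _ /=; rewrite ?mk00 ?mk01 ?mk10 ?mk11 ?mulr1n ?mulr0n; rr.
  + move=> j r; case: j => [|[|//]] _; case: r => [|[|//]] _ /=; rewrite ?mk00 ?mk01 ?mk10 ?mk11 ?mulr1n ?mulr0n; fin hd.
  + move=> a; rewrite /xs /sl /= ?mk00 ?mk01 ?mk10 ?mk11.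
    apply: (lin0 (k := 1) (hz a)). rr.
Qed.

Lemma compPhi1 (A1 B1 : 'M[R]_3) (A2 A3 B2 B3 : 'M[R]_2) :
  apply_local A1 A2 A3 (apply_local B1 B2 B3 (Phi1 R)) =
  apply_local (A1 *m B1) (A2 *m B2) (A3 *m B3) (Phi1 R).
Proof.
apply/ffunP => [[[i j] k]].
rewrite apE !sum3 !appPhi1 !mxE !sum3 !sum2.
rr.
Qed.

Lemma compPhi2 (A1 B1 : 'M[R]_3) (A2 A3 B2 B3 : 'M[R]_2) :
  apply_local A1 A2 A3 (apply_local B1 B2 B3 (Phi2 R)) =
  apply_local (A1 *m B1) (A2 *m B2) (A3 *m B3) (Phi2 R).
Proof.
apply/ffunP => [[[i j] k]].
rewrite apE !sum3 !appPhi2 !mxE !sum3 !sum2.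
rr.
Qed.

Lemma trans1 (a b : state R) : slocc_le a b -> slocc_le b (Phi1 R) -> slocc_le a (Phi1 R).
Proof.
move=> [A1 [A2 [A3 <-]]] [B1 [B2 [B3 <-]]].
by exists (A1 *m B1), (A2 *m B2), (A3 *m B3); rewrite compPhi1.
Qed.

Lemma trans2 (a b : state R) : slocc_le a b -> slocc_le b (Phi2 R) -> slocc_le a (Phi2 R).
Proof.
move=> [A1 [A2 [A3 <-]]] [B1 [B2 [B3 <-]]].
by exists (A1 *m B1), (A2 *m B2), (A3 *m B3); rewrite compPhi2.
Qed.

End S.

Theorem mainTheorem7 (C : numClosedFieldType) :
  [/\ slocc_maximal (Phi1 C),
      slocc_maximal (Phi2 C),
      ~ slocc_equiv (Phi1 C) (Phi2 C)
    & forall phi : state C, slocc_maximal phi ->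
        slocc_equiv phi (Phi1 C) \/ slocc_equiv phi (Phi2 C)].
Proof.
split.
- move=> psi h; case: (univ psi) => // h2.
  by case: (@notle12 C); apply: trans2 h h2.
- move=> psi h; case: (univ psi) => // h2.
  by case: (@notle21 C); apply: trans1 h h2.
- by case=> _ h; apply: (@notle21 C).
- move=> phi hm; case: (univ phi) => h; [left|right]; split => //; exact: hm.
Qed.
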